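(* Let $\mathbf a=(a_1,\ldots,a_n)\in\mathbb Z_{\geq1}^n$ and $\mathbf b=(b_1,\ldots,b_m)\in\mathbb Z_{\geq1}^m$, let $d_{i,j}=\gcd(a_i,b_j)$, and let $F_{\mathbf a,\mathbf b}(\mathbf z,\mathbf w)=\sum_{(\mathbf x,\mathbf y)\in\mathcal S(\mathbf a,\mathbf b)} z_1^{x_1}\cdots z_n^{x_n}w_1^{y_1}\cdots w_m^{y_m}$. Then $F_{\mathbf a,\mathbf b}$ is a rational function with denominator $D_{\mathbf a,\mathbf b}(\mathbf z,\mathbf w)=\prod_{(\mathbf x,\mathbf y)\in\mathcal S_c}(1-\mathbf z^{\mathbf x}\mathbf w^{\mathbf y})=\prod_{i=1}^n\prod_{j=1}^m\left(1-z_i^{b_j/d_{i,j}}w_j^{a_i/d_{i,j}}\right)$, i.e., $F_{\mathbf a,\mathbf b}=P/D_{\mathbf a,\mathbf b}$ for some polynomial $P$.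
   Context: $\mathcal S(\mathbf a,\mathbf b)$ is the set of $(\mathbf x,\mathbf y)\in\mathbb Z_{\geq0}^n\times\mathbb Z_{\geq0}^m$ with $\sum_ix_ia_i=\sum_jy_jb_j$, and $\mathbf z^{\mathbf x}=z_1^{x_1}\cdots z_n^{x_n}$, $\mathbf w^{\mathbf y}=w_1^{y_1}\cdots w_m^{y_m}$. $\mathcal S_c=\mathcal S_c(\mathbf a,\mathbf b)$ is the set of completely fundamental solutions: $(\mathbf x,\mathbf y)\in\mathcal S(\mathbf a,\mathbf b)$ such that for every $k\in\mathbb Z_{\geq1}$ and every decomposition $k(\mathbf x,\mathbf y)=(\mathbf x',\mathbf y')+(\mathbf x'',\mathbf y'')$ with both summands in $\mathcal S(\mathbf a,\mathbf b)$, there are nonnegative integers $r,s$ with $(\mathbf x',\mathbf y')=r(\mathbf x,\mathbf y)$, $(\mathbf x'',\mathbf y'')=s(\mathbf x,\mathbf y)$, $r+s=k$. *)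

(* Defs.v *)
From mathcomp Require Import all_boot all_order all_algebra.
From mathcomp Require Import mpoly.
Set Implicit Arguments. Unset Strict Implicit. Unset Printing Implicit Defensive.
Import GRing.Theory.
Local Open Scope ring_scope.

(* A pair (x, y) in Z_{>=0}^n x Z_{>=0}^m is encoded as one monomial
   v : 'X_{1..n+m}: the z-exponents are v (lshift m i), the w-exponents are
   v (rshift n j).  Thus z^x w^y is the mpoly monomial 'X_[v]. *)

Definition xpart (n m : nat) (v : 'X_{1..n + m}) (i : 'I_n) : nat := v (lshift m i).
Definition ypart (n m : nat) (v : 'X_{1..n + m}) (j : 'I_m) : nat := v (rshift n j).

Definition inS (n m : nat) (a : 'I_n -> nat) (b : 'I_m -> nat) (v : 'X_{1..n + m}) : bool :=
  (\sum_(i < n) xpart v i * a i)%N == (\sum_(j < m) ypart v j * b j)%N.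

(* Completely fundamental solutions S_c(a,b). As in Stanley's definition,
   the zero solution is excluded. *)
Definition completely_fundamental (n m : nat) (a : 'I_n -> nat) (b : 'I_m -> nat)
  (v : 'X_{1..n + m}) : Prop :=
  inS a b v /\ v <> 0%MM /\
  forall (k : nat) (v' v'' : 'X_{1..n + m}), (0 < k)%N ->
    inS a b v' -> inS a b v'' -> (v *+ k)%MM = (v' + v'')%MM ->
    exists r s : nat, v' = (v *+ r)%MM /\ v'' = (v *+ s)%MM /\ (r + s)%N = k.

(* The exponent of z_i^{b_j/d_ij} w_j^{a_i/d_ij}. *)
Definition eij (n m : nat) (a : 'I_n -> nat) (b : 'I_m -> nat) (i : 'I_n) (j : 'I_m)
  : 'X_{1..n + m} :=
  [multinom match split k with
            | inl i' => if i' == i then (b j %/ gcdn (a i) (b j))%N else 0%N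
            | inr j' => if j' == j then (a i %/ gcdn (a i) (b j))%N else 0%N
            end | k < n + m].

Definition Dab (n m : nat) (a : 'I_n -> nat) (b : 'I_m -> nat) : {mpoly int[n + m]} :=
  \prod_(i < n) \prod_(j < m) (1 - 'X_[eij a b i j]).

(* Coefficient of monomial e in the formal power series F_{a,b} * Q,
   where F_{a,b} = sum_{v in S(a,b)} 'X_[v] and Q is a polynomial. *)
Definition coef_FS_mul (n m : nat) (a : 'I_n -> nat) (b : 'I_m -> nat)
  (Q : {mpoly int[n + m]}) (e : 'X_{1..n + m}) : int :=
  \sum_(t <- msupp Q | (t <= e)%MM) Q@_t * (inS a b (e - t)%MM)%:R.

(* Main.v *)
Require Import Defs.
From mathcomp Require Import all_boot all_order all_algebra.
From mathcomp Require Import mpoly zify.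
Set Implicit Arguments. Unset Strict Implicit. Unset Printing Implicit Defensive.
Import GRing.Theory.

Section Basic.
Variables (n m : nat) (a : 'I_n -> nat) (b : 'I_m -> nat).
Hypotheses (ha : forall i, (0 < a i)%N) (hb : forall j, (0 < b j)%N).

Local Notation N := (n + m)%N.
Local Notation dd i j := (gcdn (a i) (b j)).
Local Notation bq i j := (b j %/ gcdn (a i) (b j))%N.
Local Notation aq i j := (a i %/ gcdn (a i) (b j))%N.

Lemma eijL i j i' : eij a b i j (lshift m i') = if i' == i then bq i j else 0%N.
Proof. by rewrite /eij mnmE (unsplitK (inl i' : 'I_n + 'I_m)). Qed.

Lemma eijR i j j' : eij a b i j (rshift n j') = if j' == j then aq i j else 0%N.
Proof. by rewrite /eij mnmE (unsplitK (inr j' : 'I_n + 'I_m)). Qed.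

Lemma dd_gt0 i j : (0 < dd i j)%N.
Proof. by rewrite gcdn_gt0 ha. Qed.

Lemma aE i j : a i = (aq i j * dd i j)%N.
Proof. by rewrite divnK // dvdn_gcdl. Qed.

Lemma bE i j : b j = (bq i j * dd i j)%N.
Proof. by rewrite divnK // dvdn_gcdr. Qed.

Lemma aq_gt0 i j : (0 < aq i j)%N.
Proof. by move: (ha i); rewrite {1}(aE i j) muln_gt0 => /andP[]. Qed.

Lemma bq_gt0 i j : (0 < bq i j)%N.
Proof. by move: (hb j); rewrite {1}(bE i j) muln_gt0 => /andP[]. Qed.

Lemma cop i j : coprime (bq i j) (aq i j).
Proof.
have H : (gcdn (bq i j) (aq i j) * dd i j = dd i j)%N.
  by rewrite muln_gcdl -bE -aE gcdnC.
move: H; rewrite -[X in _ = X]mul1n => /eqP; rewrite eqn_pmul2r ?dd_gt0 //.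
Qed.

Lemma sumL (f : 'I_n -> nat) i c :
  (forall i', i' != i -> f i' = 0%N) -> (\sum_(i' < n) f i' * c i')%N = (f i * c i)%N.
Proof.
move=> H; rewrite (bigD1 i) //= big1 ?addn0 // => i' /H ->; by rewrite mul0n.
Qed.

Lemma sumR (f : 'I_m -> nat) j c :
  (forall j', j' != j -> f j' = 0%N) -> (\sum_(j' < m) f j' * c j')%N = (f j * c j)%N.
Proof.
move=> H; rewrite (bigD1 j) //= big1 ?addn0 // => j' /H ->; by rewrite mul0n.
Qed.

Lemma inS_eij i j : inS a b (eij a b i j).
Proof.
rewrite /inS (@sumL _ i); last by move=> i'; rewrite /xpart eijL => /negbTE ->.
rewrite (@sumR _ j); last by move=> j'; rewrite /ypart eijR => /negbTE ->.
rewrite /xpart /ypart eijL eijR !eqxx; apply/eqP.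
transitivity (bq i j * aq i j * dd i j)%N; first by rewrite -mulnA -aE.
by rewrite (mulnC (bq i j)) -mulnA -bE.
Qed.

Lemma inSD u e : inS a b e -> inS a b (u + e)%MM = inS a b u.
Proof.
rewrite /inS /xpart /ypart => /eqP He.
under eq_bigr do rewrite mnmDE mulnDl.
under [X in _ == X]eq_bigr do rewrite mnmDE mulnDl.
by rewrite !big_split /= He eqn_add2r.
Qed.

Lemma inSMn u k : inS a b u -> inS a b (u *+ k)%MM.
Proof.
rewrite /inS /xpart /ypart => /eqP He.
under eq_bigr do rewrite mulmnE mulnAC.
under [X in _ == X]eq_bigr do rewrite mulmnE mulnAC.
by rewrite -!big_distrl /= He.
Qed.

Lemma mnm_split (u v : 'X_{1..N}) :
  (forall i, u (lshift m i) = v (lshift m i)) ->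
  (forall j, u (rshift n j) = v (rshift n j)) -> u = v.
Proof.
move=> H1 H2; apply/mnmP => k; rewrite -(splitK k).
by case: (split k) => [i|j] /=; [apply: H1|apply: H2].
Qed.

Lemma support u i j : inS a b u ->
  (forall k, eij a b i j k = 0%N -> u k = 0%N) ->
  u = (eij a b i j *+ (u (lshift m i) %/ bq i j))%MM.
Proof.
move=> Hu Hs.
have HL i' : i' != i -> u (lshift m i') = 0%N.
  by move=> ne; apply: Hs; rewrite eijL (negbTE ne).
have HR j' : j' != j -> u (rshift n j') = 0%N.
  by move=> ne; apply: Hs; rewrite eijR (negbTE ne).
move: Hu; rewrite /inS (@sumL _ i) ?(@sumR _ j) /xpart /ypart //.
set x := u (lshift m i); set y := u (rshift n j).
move=> E0.
have E : (x * aq i j * dd i j == y * bq i j * dd i j)%N by rewrite -!mulnA -aE -bE.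
move: E; rewrite eqn_pmul2r ?dd_gt0 // => /eqP E.
have dvd : (bq i j %| x)%N.
  by rewrite -(Gauss_dvdl _ (cop i j)) E dvdn_mull.
have xE : x = (x %/ bq i j * bq i j)%N by rewrite divnK.
have yE : y = (x %/ bq i j * aq i j)%N.
  apply/eqP; rewrite -(eqn_pmul2r (bq_gt0 i j)) -E.
  by rewrite mulnAC divnK.
apply: mnm_split => [i'|j']; rewrite mulmnE ?eijL ?eijR.
- case: eqP => [->|/eqP ne]; last by rewrite mul0n HL.
  by rewrite -/x {1}xE mulnC.
- case: eqP => [->|/eqP ne]; last by rewrite mul0n HR.
  by rewrite -/y yE mulnC.
Qed.


Lemma eij_neq0 i j : eij a b i j <> 0%MM.
Proof.
move/mnmP => /(_ (lshift m i)); rewrite eijL eqxx mnm0E => H.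
by move: (bq_gt0 i j); rewrite H.
Qed.

Lemma cf_eij i j : completely_fundamental a b (eij a b i j).
Proof.
split; first exact: inS_eij.
split; first exact: eij_neq0.
move=> k v' v'' k0 H' H'' /mnmP E.
have Z k' : eij a b i j k' = 0%N -> v' k' = 0%N /\ v'' k' = 0%N.
  move=> ek; have := E k'; rewrite mulmnE mnmDE ek mul0n => /esym /eqP.
  by rewrite addn_eq0 => /andP[/eqP -> /eqP ->].
have Hv' := support H' (fun k' ek => proj1 (Z k' ek)).
have Hv'' := support H'' (fun k' ek => proj2 (Z k' ek)).
set r := (v' (lshift m i) %/ bq i j)%N in Hv'.
set s := (v'' (lshift m i) %/ bq i j)%N in Hv''.
exists r, s; split => //; split => //.
have E1 := E (lshift m i).
rewrite Hv' Hv'' mnmDE !mulmnE eijL eqxx -mulnDr in E1.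
by apply/eqP; rewrite -(eqn_pmul2l (bq_gt0 i j)) E1.
Qed.

Lemma inSB w e : inS a b w -> inS a b e -> (e <= w)%MM -> inS a b (w - e)%MM.
Proof.
by move=> Hw He le; rewrite -(inSD _ He) submK.
Qed.

Lemma eq0_split (v : 'X_{1..N}) :
  (forall i, v (lshift m i) = 0%N) -> (forall j, v (rshift n j) = 0%N) -> v = 0%MM.
Proof. by move=> H1 H2; apply: mnm_split => [i|j]; rewrite mnm0E. Qed.

Lemma cf_is_eij v : completely_fundamental a b v -> exists i j, v = eij a b i j.
Proof.
case=> Hv [nz Hcf].
have [i xi] : exists i, (0 < v (lshift m i))%N.
  apply/existsP; apply: contraNT (introN eqP nz); rewrite negb_exists => /forallP Hx.
  have Sx : (\sum_(i < n) xpart v i * a i = 0)%N.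
    by apply: big1 => i _; move: (Hx i); rewrite lt0n negbK => /eqP; rewrite /xpart => ->.
  move: Hv; rewrite /inS Sx eq_sym sum_nat_eq0 => /forallP Hy.
  apply/eqP; apply: eq0_split => [i|j]; first by move: (Hx i); rewrite lt0n negbK => /eqP.
  by move: (Hy j) => /=; rewrite muln_eq0 (negbTE (lt0n_neq0 (hb j))) orbF => /eqP.
have [j yj] : exists j, (0 < v (rshift n j))%N.
  apply/existsP; apply: contraTT xi; rewrite negb_exists => /forallP Hy.
  have Sy : (\sum_(j < m) ypart v j * b j = 0)%N.
    by apply: big1 => j _; move: (Hy j); rewrite lt0n negbK => /eqP; rewrite /ypart => ->.
  move: Hv; rewrite /inS Sy sum_nat_eq0 => /forallP /(_ i) /=.
  by rewrite muln_eq0 (negbTE (lt0n_neq0 (ha i))) orbF lt0n negbK.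
exists i, j.
set k := (a i * b j)%N.
have k0 : (0 < k)%N by rewrite muln_gt0 ha hb.
have le : (eij a b i j <= v *+ k)%MM.
  apply/mnm_lepP => q; rewrite mulmnE -(splitK q); case: (split q) => [i'|j'] /=.
    rewrite eijL; case: eqP => [->|]//.
    apply: (leq_trans (leq_div _ _)); apply: (leq_trans (leq_pmull _ (ha i))).
    exact: leq_pmull.
  rewrite eijR; case: eqP => [->|]//.
  apply: (leq_trans (leq_div _ _)); apply: (leq_trans (leq_pmulr _ (hb j))).
  exact: leq_pmull.
have Ek : (v *+ k)%MM = (eij a b i j + (v *+ k - eij a b i j))%MM by rewrite addmC submK.
have [r [s [Er _]]] := Hcf k (eij a b i j) (v *+ k - eij a b i j)%MM k0
   (inS_eij i j) (inSB (inSMn k Hv) (inS_eij i j) le) Ek.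
have r0 : r <> 0%N by move=> r0; apply: (@eij_neq0 i j); rewrite Er r0 mulm0n.
have Hs : forall q, eij a b i j q = 0%N -> v q = 0%N.
  move=> q; rewrite Er mulmnE => /eqP; rewrite muln_eq0 => /orP[/eqP//|/eqP//].
have Ev := support Hv Hs.
set c := (v (lshift m i) %/ bq i j)%N in Ev.
move/mnmP: Er => /(_ (lshift m i)); rewrite Ev !mulmnE eijL eqxx -mulnA.
rewrite -[X in X = _]muln1 => /eqP; rewrite eqn_pmul2l ?bq_gt0 // eq_sym muln_eq1.
by case/andP => /eqP c1 _; rewrite c1 mulm1n.
Qed.

Lemma eij_inj i j i' j' : eij a b i j = eij a b i' j' -> i = i' /\ j = j'.
Proof.
move/mnmP => E; split.
  move: (E (lshift m i)); rewrite !eijL eqxx; case: eqP => // _ H.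
  by move: (bq_gt0 i j); rewrite H.
move: (E (rshift n j)); rewrite !eijR eqxx; case: eqP => // _ H.
by move: (aq_gt0 i j); rewrite H.
Qed.

End Basic.
Section Bnd.
Variable (N : nat).
Local Open Scope ring_scope.
Implicit Types (p q : {mpoly int[N]}).

Definition bnd (k : 'I_N) (al : nat) p := forall t, t \in msupp p -> (t k <= al)%N.

Lemma bnd_mul k al be p q : bnd k al p -> bnd k be q -> bnd k (al + be)%N (p * q).
Proof.
move=> Hp Hq t /msuppM_le /allpairsP [[t1 t2] /= [h1 h2 ->]].
by rewrite mnmDE leq_add ?Hp ?Hq.
Qed.

Lemma bnd1 k : bnd k 0 1.
Proof.
move=> t; rewrite mcoeff_msupp mcoeff1.
by case: (t =P 0%MM) => [-> _|_]; [rewrite mnm0E | rewrite eqxx].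
Qed.

Lemma bnd_1X k (f : 'X_{1..N}) : bnd k (f k) (1 - 'X_[f]).
Proof.
move=> t /msuppB_le; rewrite mem_cat => /orP[/(bnd1 k) H|]; first by apply: leq_trans H _.
by rewrite msuppX mem_seq1 => /eqP ->.
Qed.

Lemma bnd_prod k (I : Type) (r : seq I) (P : pred I) (F : I -> 'X_{1..N}) :
  bnd k (\sum_(i <- r | P i) F i k)%N (\prod_(i <- r | P i) (1 - 'X_[F i])).
Proof.
elim: r => [|x r IH]; first by rewrite !big_nil; exact: bnd1.
rewrite !big_cons; case: (P x) => //. apply: bnd_mul; [exact: bnd_1X | exact: IH].
Qed.

End Bnd.
Section Phi.
Variables (n m : nat) (a : 'I_n -> nat) (b : 'I_m -> nat).
Local Notation N := (n + m)%N.
Local Open Scope ring_scope.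
Implicit Types (p q R : {mpoly int[N]}).

Definition gg (e t : 'X_{1..N}) : bool := (t <= e)%MM && inS a b (e - t)%MM.
Definition Phi e p : int := \sum_(t <- msupp p) p@_t * (gg e t)%:R.

Lemma coefFSE p e : coef_FS_mul a b p e = Phi e p.
Proof.
rewrite /coef_FS_mul /Phi big_mkcond /=; apply: eq_bigr => t _.
by rewrite /gg; case: (t <= e)%MM => //=; rewrite mulr0.
Qed.

Lemma Phi_sub e p (r : seq 'X_{1..N}) : uniq r -> {subset msupp p <= r} ->
  Phi e p = \sum_(t <- r) p@_t * (gg e t)%:R.
Proof.
move=> ur sub; rewrite (bigID (mem (msupp p))) /= [X in _ + X]big1 ?addr0; last first.
  by move=> t /memN_msupp_eq0 ->; rewrite mul0r.
rewrite -big_filter /Phi; apply: perm_big; apply: uniq_perm.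
- exact: msupp_uniq.
- exact: filter_uniq.
by move=> t; rewrite mem_filter; case: (boolP (t \in msupp p)) => // /sub ->.
Qed.

Lemma PhiB e p q : Phi e (p - q) = Phi e p - Phi e q.
Proof.
set r := undup (msupp p ++ msupp q).
have ur : uniq r by apply: undup_uniq.
rewrite (@Phi_sub e (p - q) r) ?(@Phi_sub e p r) ?(@Phi_sub e q r) //.
- by rewrite -sumrB; apply: eq_bigr => t _; rewrite mcoeffB mulrBl.
- by move=> t tq; rewrite mem_undup mem_cat tq orbT.
- by move=> t tp; rewrite mem_undup mem_cat tp.
- by move=> t /msuppB_le; rewrite mem_undup.
Qed.

Lemma PhiMX e f R : (f <= e)%MM -> Phi e (R * 'X_[f]) = Phi (e - f)%MM R.
Proof.
move=> fe; rewrite /Phi (perm_big _ (msuppMX R f)) big_map.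
apply: eq_bigr => t _; rewrite mcoeffMX; congr (_ * (_)%:R).
rewrite /gg submDA; congr (_ && _).
apply/mnm_lepP/mnm_lepP => H k.
  by move/mnm_lepP: fe => /(_ k) fe; rewrite mnmBE leq_subRL // -mnmDE H.
by move/mnm_lepP: fe => /(_ k) fe; move: (H k); rewrite mnmBE leq_subRL // -mnmDE.
Qed.

Lemma Phi_shift e e0 R : inS a b e0 -> (e0 <= e)%MM ->
  (forall t, t \in msupp R -> forall k, e0 k != 0%N -> (t k + e0 k <= e k)%N) ->
  Phi e R = Phi (e - e0)%MM R.
Proof.
move=> He0 le H; rewrite /Phi big_seq_cond [RHS]big_seq_cond.
apply: eq_bigr => t /andP[tR _]; congr (_ * (_)%:R).
rewrite /gg.
have E1 : (t <= e)%MM = (t <= e - e0)%MM.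
  apply/mnm_lepP/mnm_lepP => Ht k; rewrite ?mnmBE.
    case: (boolP (e0 k == 0%N)) => [/eqP ->|nz]; first by rewrite subn0.
    have := H t tR k nz; lia.
  by apply: leq_trans (Ht k) _; rewrite mnmBE leq_subr.
rewrite E1; case: (boolP (t <= e - e0)%MM) => //= Ht.
have -> : (e - t)%MM = (e - e0 - t + e0)%MM.
  apply/mnmP => k; rewrite !mnmDE !mnmBE.
  move/mnm_lepP: le => /(_ k) le; move/mnm_lepP: Ht => /(_ k); rewrite mnmBE => Ht.
  lia.
by rewrite inSD.
Qed.

End Phi.
Section Main.
Variables (n m : nat) (a : 'I_n -> nat) (b : 'I_m -> nat).
Hypotheses (ha : forall i, (0 < a i)%N) (hb : forall j, (0 < b j)%N).
Local Notation N := (n + m)%N.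
Local Open Scope ring_scope.

Local Notation E p := (eij a b p.1 p.2).
Definition Xb (k : 'I_N) : nat := (\sum_(p : 'I_n * 'I_m) E p k)%N.

Lemma DabE : Dab a b = \prod_(p : 'I_n * 'I_m) (1 - 'X_[E p]).
Proof. by rewrite /Dab pair_big. Qed.

Lemma Dab_bnd k : bnd k (Xb k) (Dab a b).
Proof. rewrite DabE /Xb; exact: bnd_prod. Qed.

Lemma E_supp (p0 : 'I_n * 'I_m) k : E p0 k != 0%N ->
  k = lshift m p0.1 \/ k = rshift n p0.2.
Proof.
rewrite -(splitK k); case: (split k) => [i'|j'] /=.
  by rewrite eijL; case: (i' =P p0.1) => [->|] //; left.
by rewrite eijR; case: (j' =P p0.2) => [->|] //; right.
Qed.

Lemma Z1 (e : 'X_{1..N}) (i0 : 'I_n) (j0 : 'I_m) :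
  (Xb (lshift m i0) <= e (lshift m i0))%N -> (Xb (rshift n j0) <= e (rshift n j0))%N ->
  Phi a b e (Dab a b) = 0.
Proof.
move=> h1 h2; set p0 := (i0, j0).
have hk k : E p0 k != 0%N -> (Xb k <= e k)%N.
  by case/E_supp => ->.
rewrite DabE (bigD1 p0) //= mulrC.
set R := \prod_(p | p != p0) _.
have XbE k : Xb k = (E p0 k + \sum_(p | p != p0) E p k)%N.
  by rewrite /Xb (bigD1 p0).
have le : (E p0 <= e)%MM.
  apply/mnm_lepP => k; case: (boolP (E p0 k == 0%N)) => [/eqP ->//|nz].
  by apply: leq_trans (hk k nz); rewrite XbE leq_addr.
rewrite mulrBr mulr1 PhiB PhiMX // (@Phi_shift _ _ _ _ _ (E p0)) ?subrr //.
  exact: inS_eij.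
move=> t tR k nz; apply: leq_trans (hk k nz); rewrite XbE.
rewrite [X in (X <= _)%N]addnC leq_add2l; have H := @bnd_prod _ k _ (index_enum _) (fun p => p != p0) (fun p => E p).
exact: H t tR.
Qed.

Definition Sa := (\sum_(i < n) Xb (lshift m i) * a i)%N.
Definition Sb := (\sum_(j < m) Xb (rshift n j) * b j)%N.

Lemma noterm (e : 'X_{1..N}) : (forall t, t \in msupp (Dab a b) -> ~~ gg a b e t) ->
  Phi a b e (Dab a b) = 0.
Proof.
move=> H; rewrite /Phi big_seq big1 // => t /H /negbTE ->; by rewrite mulr0.
Qed.

Lemma Z2L (e : 'X_{1..N}) (i0 : 'I_n) :
  (Xb (lshift m i0) + Sb < e (lshift m i0))%N ->
  (forall j, e (rshift n j) < Xb (rshift n j))%N ->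
  Phi a b e (Dab a b) = 0.
Proof.
move=> h1 h2; apply: noterm => t tD; apply/negP; rewrite /gg => /andP[le /eqP hS].
have bt := Dab_bnd (lshift m i0) tD.
have R : (\sum_(j < m) ypart (e - t) j * b j <= Sb)%N.
  apply: leq_sum => j _; rewrite leq_mul2r /ypart mnmBE; apply/orP; right.
  by apply: leq_trans (leq_subr _ _) (ltnW (h2 j)).
have L : (xpart (e - t) i0 * a i0 <= \sum_(i < n) xpart (e - t) i * a i)%N.
  by rewrite (bigD1 i0) //= leq_addr.
have := ha i0; rewrite /xpart mnmBE in L; rewrite hS in L.
move: (leq_trans L R) => {}L.
have : (e (lshift m i0) - t (lshift m i0) <= (e (lshift m i0) - t (lshift m i0)) * a i0)%N.
  by rewrite leq_pmulr.
lia.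
Qed.

Lemma Z2R (e : 'X_{1..N}) (j0 : 'I_m) :
  (Xb (rshift n j0) + Sa < e (rshift n j0))%N ->
  (forall i, e (lshift m i) < Xb (lshift m i))%N ->
  Phi a b e (Dab a b) = 0.
Proof.
move=> h1 h2; apply: noterm => t tD; apply/negP; rewrite /gg => /andP[le /eqP hS].
have bt := Dab_bnd (rshift n j0) tD.
have R : (\sum_(i < n) xpart (e - t) i * a i <= Sa)%N.
  apply: leq_sum => i _; rewrite leq_mul2r /xpart mnmBE; apply/orP; right.
  by apply: leq_trans (leq_subr _ _) (ltnW (h2 i)).
have L : (ypart (e - t) j0 * b j0 <= \sum_(j < m) ypart (e - t) j * b j)%N.
  by rewrite (bigD1 j0) //= leq_addr.
have := hb j0; rewrite /ypart mnmBE in L; rewrite -hS in L.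
move: (leq_trans L R) => {}L.
have : (e (rshift n j0) - t (rshift n j0) <= (e (rshift n j0) - t (rshift n j0)) * b j0)%N.
  by rewrite leq_pmulr.
lia.
Qed.

Definition BB := ((\max_(k : 'I_N) Xb k) + Sa + Sb + 1)%N.

Lemma big_zero (e : 'X_{1..N}) k : (BB <= e k)%N -> Phi a b e (Dab a b) = 0.
Proof.
have mx k' : (Xb k' <= \max_(k : 'I_N) Xb k)%N by apply: leq_bigmax.
rewrite -(splitK k); case: (split k) => [i0|j0] /= h0.
  have h : (BB <= e (lshift m i0))%N := h0; rewrite /BB in h.
  case: (boolP [exists j, Xb (rshift n j) <= e (rshift n j)]%N).
    case/existsP => j0 hj; apply: (@Z1 e i0 j0 _ hj).
    by have := mx (lshift m i0); lia.
  rewrite negb_exists => /forallP hj; apply: (@Z2L e i0).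
    by have := mx (lshift m i0); lia.
  by move=> j; move: (hj j); rewrite -ltnNge.
have h : (BB <= e (rshift n j0))%N := h0; rewrite /BB in h.
case: (boolP [exists i, Xb (lshift m i) <= e (lshift m i)]%N).
  case/existsP => i0 hi; apply: (@Z1 e i0 j0 hi).
  by have := mx (rshift n j0); lia.
rewrite negb_exists => /forallP hi; apply: (@Z2R e j0).
  by have := mx (rshift n j0); lia.
by move=> i; move: (hi i); rewrite -ltnNge.
Qed.

Lemma part2 : exists P : {mpoly int[N]},
  forall e : 'X_{1..N}, P@_e = coef_FS_mul a b (Dab a b) e.
Proof.
exists (\sum_(u : 'X_{1..N < (N * BB).+1}) coef_FS_mul a b (Dab a b) u *: 'X_[u]).
move=> e; rewrite raddf_sum /=.
under eq_bigr do rewrite mcoeffZ mcoeffX.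
case: (ltnP (mdeg e) (N * BB).+1) => [lt|ge].
  rewrite (bigD1 (BMultinom lt)) //= eqxx mulr1 big1 ?addr0 // => u ne.
  case: eqP => [E0|]; last by rewrite mulr0.
  by move: ne; rewrite bmeqP /= E0 eqxx.
rewrite big1; last first.
  move=> u _; case: eqP => [E0|]; last by rewrite mulr0.
  by move: (bmdeg u) ge; rewrite E0 => h1 h2; move: (leq_ltn_trans h2 h1); rewrite ltnn.
rewrite coefFSE.
have [k hk] : exists k, (BB <= e k)%N.
  apply/existsP; apply: contraTT ge; rewrite negb_exists => /forallP H.
  rewrite -ltnNge ltnS mdegE.
  apply: leq_trans (_ : \sum_(k < N) BB <= _)%N.
    by apply: leq_sum => k _; move: (H k); rewrite -ltnNge => /ltnW.
  by rewrite sum_nat_const card_ord.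
by rewrite (big_zero hk).
Qed.

End Main.

Unset Implicit Arguments.
Local Open Scope ring_scope.

Theorem corollary6 (n m : nat) (a : 'I_n -> nat) (b : 'I_m -> nat)
  (ha : forall i, (0 < a i)%N) (hb : forall j, (0 < b j)%N) :
  (exists s : seq 'X_{1..n + m},
     [/\ uniq s,
         (forall v, v \in s <-> completely_fundamental a b v) &
         \prod_(v <- s) (1 - 'X_[v]) = Dab a b]) /\
  (exists P : {mpoly int[n + m]},
     forall e : 'X_{1..n + m}, P@_e = coef_FS_mul a b (Dab a b) e).
Proof.
split; last exact: part2.
exists [seq eij a b p.1 p.2 | p <- enum {: 'I_n * 'I_m}]; split.
- rewrite map_inj_uniq ?enum_uniq // => [[i j] [i' j']] /= /(eij_inj ha hb) [-> ->] //.
- move=> v; split.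
    by case/mapP => p _ ->; apply: cf_eij.
  case/(cf_is_eij ha hb) => i [j ->]; apply/mapP; exists (i, j) => //.
  by rewrite mem_enum.
- by rewrite big_map big_enum /= DabE.
Qed.
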